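(* Let $G=(V,w)$ be a weighted graph and let $\mathcal{L}$ be a maximal cross-free family of cuts of $V$. Suppose that $w(\Delta(X))=c$ for every cut $\Delta(X)\in\mathcal{L}$. Then the minimum cut weight of $G$ is $c$.
   Context: $G=(V,w)$ has nonnegative weights $w$ on unordered pairs of distinct vertices. A cut is identified by an unordered bipartition $\{X,V\setminus X\}$ with $\emptyset\ne X\subsetneq V$; $\Delta(X)$ denotes the set of pairs with exactly one endpoint in $X$, and $w(\Delta(X))$ is the sum of their weights. Sets $X,Y\subseteq V$ cross if $X\cap Y$, $X\setminus Y$, $Y\setminus X$, $V\setminus(X\cup Y)$ are all nonempty; cuts cross if their shores cross. A family of cuts is cross-free if no two members cross, and maximal cross-free if no other cut (bipartition of $V$) can be added while keeping it cross-free. *)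

(* Defs.v *)
From HB Require Import structures.
From mathcomp Require Import all_boot all_order all_algebra.
Set Implicit Arguments. Unset Strict Implicit. Unset Printing Implicit Defensive.
Import Order.TTheory GRing.Theory Num.Theory.
Local Open Scope ring_scope.

(* Vertices: a finite type V.  Unordered pairs of distinct vertices are the
   2-element subsets of V; a weighting w assigns a value to every such pair
   (values on other sets are irrelevant). *)

Definition is_pair (V : finType) (e : {set V}) : bool := #|e| == 2%N.

Definition Delta (V : finType) (X : {set V}) : {set {set V}} :=
  [set e : {set V} | is_pair e && (#|e :&: X| == 1%N)].

Definition cutw (R : numDomainType) (V : finType) (w : {set V} -> R)
  (X : {set V}) : R := \sum_(e in Delta X) w e.

Definition shore (V : finType) (X : {set V}) : bool :=
  (X != set0) && (X != [set: V]).

Definition is_cut (V : finType) (C : {set {set V}}) : Prop :=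
  exists X : {set V}, shore X /\ C = [set X; ~: X].

Definition cross (V : finType) (X Y : {set V}) : bool :=
  [&& X :&: Y != set0, X :\: Y != set0, Y :\: X != set0
    & ~: (X :|: Y) != set0].

Definition cuts_cross (V : finType) (C D : {set {set V}}) : Prop :=
  exists X Y, [/\ X \in C, Y \in D & cross X Y].

Definition cross_free (V : finType) (L : {set {set {set V}}}) : Prop :=
  (forall C, C \in L -> is_cut C) /\
  (forall C D, C \in L -> D \in L -> ~ cuts_cross C D).

Definition maximal_cross_free (V : finType) (L : {set {set {set V}}}) : Prop :=
  cross_free L /\
  (forall C, is_cut C -> C \notin L -> ~ cross_free (C |: L)).

(* Main.v *)
Require Import Defs.
From HB Require Import structures.
From mathcomp Require Import all_boot all_order all_algebra.
From mathcomp Require Import lra zify.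
Import Order.TTheory GRing.Theory Num.Theory.
Local Open Scope ring_scope.
Set Implicit Arguments. Unset Strict Implicit.


Section Aux.
Variable V : finType.
Implicit Types X Y Z S : {set V}.

Lemma notT S : S != setT -> exists y, y \notin S.
Proof.
move=> h; apply/existsP; apply: contraR h; rewrite negb_exists => /forallP h.
apply/eqP/setP => x; rewrite inE; by have := h x; rewrite negbK.
Qed.

Lemma notT' S y : y \notin S -> S != setT.
Proof. by move=> h; apply: contra h => /eqP ->; rewrite inE. Qed.

Lemma crossE X Y : cross X Y ->
  [/\ exists a, (a \in X) && (a \in Y), exists b, (b \in X) && (b \notin Y),
      exists d, (d \notin X) && (d \in Y) & exists e, (e \notin X) && (e \notin Y)].
Proof.
case/and4P => /set0Pn[a] ha /set0Pn[b] hb /set0Pn[d] hd /set0Pn[e] he.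
move: ha hb hd he; rewrite !inE negb_or => ha hb hd he.
case/andP: hb => hb1 hb2.
split; [exists a|exists b; rewrite hb1 hb2|exists d|exists e]; done.
Qed.

Lemma crossI X Y a b d e : (a \in X) && (a \in Y) -> (b \in X) && (b \notin Y) ->
  (d \notin X) && (d \in Y) -> (e \notin X) && (e \notin Y) -> cross X Y.
Proof.
move=> ha hb hd he; apply/and4P; split; apply/set0Pn.
- by exists a; rewrite inE.
- by exists b; rewrite inE andbC.
- by exists d; rewrite inE.
- by exists e; rewrite !inE negb_or.
Qed.
Arguments crossI {X Y a b d e}.

Lemma ncrossE X Y : ~~ cross X Y ->
  [\/ (forall x, x \in X -> x \notin Y), (forall x, x \in X -> x \in Y),
      (forall x, x \in Y -> x \in X) | (forall x, (x \in X) || (x \in Y))].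
Proof.
move=> nc.
case: (boolP [exists a, (a \in X) && (a \in Y)]) => [/existsP[a ha]|h1]; last first.
  by apply: Or41 => x xX; apply/negP => xY; move: h1; rewrite negb_exists => /forallP/(_ x); rewrite xX xY.
case: (boolP [exists b, (b \in X) && (b \notin Y)]) => [/existsP[b hb]|h2]; last first.
  by apply: Or42 => x xX; move: h2; rewrite negb_exists => /forallP/(_ x); rewrite xX /= negbK.
case: (boolP [exists d, (d \notin X) && (d \in Y)]) => [/existsP[d hd]|h3]; last first.
  by apply: Or43 => x xY; move: h3; rewrite negb_exists => /forallP/(_ x); rewrite xY andbT negbK.
case: (boolP [exists e, (e \notin X) && (e \notin Y)]) => [/existsP[e he]|h4]; last first.
  by apply: Or44 => x; move: h4; rewrite negb_exists => /forallP/(_ x); rewrite negb_and !negbK.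
by move: nc; rewrite (crossI ha hb hd he).
Qed.

Lemma crossC X Y : cross X Y = cross Y X.
Proof.
apply/idP/idP => /crossE[[a ha] [b hb] [d hd] [e he]];
 case/andP: ha => ??; case/andP: hb => ??; case/andP: hd => ??; case/andP: he => ??;
 apply: (crossI (a:=a) (b:=d) (d:=b) (e:=e)); apply/andP; split => //.
Qed.

Lemma crossCr X Y : cross X (~: Y) = cross X Y.
Proof.
apply/idP/idP => /crossE[[a ha] [b hb] [d hd] [e he]]; move: ha hb hd he; rewrite ?inE ?negbK => ha hb hd he.
- case/andP: ha => ??; case/andP: hb => ??; case/andP: hd => ??; case/andP: he => ??.
  by apply: (crossI (a:=b) (b:=a) (d:=e) (e:=d)); apply/andP; split.
- case/andP: ha => ??; case/andP: hb => ??; case/andP: hd => ??; case/andP: he => ??.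
  by apply: (crossI (a:=b) (b:=a) (d:=e) (e:=d)); rewrite !inE ?negbK; apply/andP; split.
Qed.

Lemma cross_refl X : ~~ cross X X.
Proof. by apply/negP => /crossE[_ [b] /andP[->]]. Qed.

End Aux.


Section Sm.
Variable V : finType.
Implicit Types X Y Z S : {set V}.

Lemma card2I (u v : V) S : u != v ->
  #|[set u; v] :&: S| = ((u \in S) + (v \in S))%N.
Proof.
move=> uv; case uS: (u \in S); case vS: (v \in S).
- rewrite (setIidPl _); first by rewrite cards2 uv.
  by apply/subsetP => x; rewrite !inE => /orP[]/eqP->.
- suff -> : [set u; v] :&: S = [set u] by rewrite cards1.
  apply/setP => x; rewrite !inE; case: (eqVneq x u) => [->|xu] //=.
  by case: (eqVneq x v) => [->|//]; rewrite vS andbF.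
- suff -> : [set u; v] :&: S = [set v] by rewrite cards1.
  apply/setP => x; rewrite !inE; case: (eqVneq x u) => [->|xu] /=; first by rewrite uS (negbTE uv).
  by case: (eqVneq x v) => [->|]; rewrite ?vS ?andbF.
- apply/eqP; rewrite cards_eq0; apply/eqP/setP => x; rewrite !inE.
  case: (eqVneq x u) => [->|_]; first by rewrite uS andbF.
  by case: (eqVneq x v) => [->|] //=; rewrite ?vS ?andbF.
Qed.

Lemma cutwE (R : numDomainType) (w : {set V} -> R) S :
  cutw w S = \sum_(e | is_pair e) (if #|e :&: S| == 1%N then w e else 0).
Proof.
rewrite /cutw /Delta -big_mkcondr; apply: eq_bigl => e; by rewrite inE.
Qed.

Lemma submod (R : realFieldType) (w : {set V} -> R) X Y :
  (forall e, is_pair e -> 0 <= w e) ->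
  cutw w (X :|: Y) + cutw w (X :&: Y) <= cutw w X + cutw w Y.
Proof.
move=> w0; rewrite !cutwE -!big_split /=; apply: ler_sum => e pe.
have := w0 e pe; move: pe; rewrite /is_pair => /cards2P[u [v [uv ->]]].
rewrite !card2I // !inE.
by case: (u \in X); case: (v \in X); case: (u \in Y); case: (v \in Y) => /= h; lra.
Qed.

End Sm.


Section L.
Variable V : finType.
Implicit Types X Y Z S : {set V}.
Variable L : {set {set {set V}}}.

Definition lsh Y : bool := [exists C in L, Y \in C].

Hypothesis cf : cross_free L.

Lemma shoreC S : shore S -> shore (~: S).
Proof.
case/andP => s0 sT; apply/andP; split.
- by case: (notT sT) => y hy; apply/set0Pn; exists y; rewrite inE.
- by case/set0Pn: s0 => x hx; apply: (notT' (y:=x)); rewrite inE negbK.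
Qed.

Lemma lsh_shore Y : lsh Y -> shore Y.
Proof.
case/existsP => C /andP[CL YC]; case: (cf.1 C CL) => S [sh CE].
by move: YC; rewrite CE !inE => /orP[]/eqP->; [|apply: shoreC].
Qed.

Lemma lshC Y : lsh Y -> lsh (~: Y).
Proof.
case/existsP => C /andP[CL YC]; case: (cf.1 C CL) => S [sh CE].
apply/existsP; exists C; rewrite CL /=; move: YC; rewrite CE !inE => /orP[]/eqP->.
  by rewrite eqxx orbT.
by rewrite setCK eqxx.
Qed.

Lemma lsh_ncross Y Z : lsh Y -> lsh Z -> ~~ cross Y Z.
Proof.
case/existsP => C /andP[CL YC]; case/existsP => D /andP[DL ZD].
by apply/negP => c; apply: (cf.2 C D CL DL); exists Y, Z.
Qed.

Lemma maxM S : maximal_cross_free L -> shore S ->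
  (forall Z, lsh Z -> ~~ cross S Z) -> lsh S.
Proof.
case=> _ mx sh nc; case E: (lsh S) => //; exfalso.
pose C := [set S; ~: S].
have CnL : C \notin L.
  by apply/negP => CL; move: E; rewrite /lsh; move/negbT/existsPn/(_ C); rewrite CL /C !inE eqxx.
have crC X : X \in C -> forall Z, lsh Z -> ~~ cross X Z.
  rewrite !inE => /orP[]/eqP-> Z lZ; first exact: nc.
  by rewrite crossC crossCr crossC; apply: nc.
have crCC X Y : X \in C -> Y \in C -> ~~ cross X Y.
  rewrite !inE => /orP[]/eqP-> /orP[]/eqP->; rewrite ?cross_refl //.
  - by rewrite crossCr cross_refl.
  - by rewrite crossC crossCr cross_refl.
apply: (mx C _ CnL).
  by exists S.
split.
  move=> D; rewrite in_setU1 => /orP[/eqP->|DL]; [by exists S|exact: cf.1].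
move=> D1 D2; rewrite !in_setU1 => /orP[/eqP->|h1] /orP[/eqP->|h2] [X [Y [hX hY hc]]].
- by move: hc; apply/negP; apply: crCC.
- by move: hc; apply/negP; apply: crC => //; apply/existsP; exists D2; rewrite h2.
- by move: hc; rewrite crossC; apply/negP; apply: crC => //; apply/existsP; exists D1; rewrite h1.
- by apply: (cf.2 D1 D2 h1 h2); exists X, Y.
Qed.

End L.


Section M.
Variables (R : realFieldType) (V : finType) (w : {set V} -> R)
  (L : {set {set {set V}}}) (c : R).
Hypothesis w0 : forall e : {set V}, is_pair e -> 0 <= w e.
Hypothesis mx : maximal_cross_free L.
Hypothesis hc : forall C, C \in L -> forall X, X \in C -> cutw w X = c.

Lemma cutw_lsh I : lsh L I -> cutw w I = c.
Proof. by case/existsP => C /andP[CL IC]; exact: (hc CL IC). Qed.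

Lemma step (X : {set V}) : (forall X', shore X' -> (#|X| < #|X'|)%N -> c <= cutw w X') ->
  shore X -> c <= cutw w X.
Proof.
move=> IH sX; have cf := mx.1.
case: (boolP [exists Z, lsh L Z && cross X Z]) => [ex|nex]; last first.
  rewrite (cutw_lsh (maxM cf mx sX _)) // => Z lZ.
  by move: nex; rewrite negb_exists => /forallP/(_ Z); rewrite lZ.
have exn : exists n, [exists Z, lsh L Z && cross X Z && (#|Z| == n)].
  case/existsP: ex => Z /andP[lZ cZ]; exists #|Z|; apply/existsP; exists Z.
  by rewrite lZ cZ eqxx.
case: (ex_minnP exn) => m /existsP[Y /andP[/andP[lY cXY] /eqP cY]] minY.
have minY' Z : lsh L Z -> (#|Z| < #|Y|)%N -> ~~ cross X Z.
  move=> lZ lt; apply/negP => cXZ.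
  have : [exists Z0, lsh L Z0 && cross X Z0 && (#|Z0| == #|Z|)].
    by apply/existsP; exists Z; rewrite lZ cXZ eqxx.
  by move/minY; rewrite -cY leqNgt lt.
have [[p hp] [q hq] [r hr] [g hg]] := crossE cXY.
move: hp hq hr hg => /andP[pX pY] /andP[qX qY] /andP[rX rY] /andP[gX gY].
have shI : shore (X :&: Y).
  apply/andP; split; first by apply/set0Pn; exists p; rewrite inE pX pY.
  by apply: (notT' (y:=r)); rewrite inE (negbTE rX).
have lI : lsh L (X :&: Y).
  apply: (maxM cf mx shI) => Z lZ; apply/negP => cIZ.
  have [[a ha] [b hb] [d hd] [e he]] := crossE cIZ.
  move: ha hb hd he; rewrite !inE => /andP[/andP[aX aY] aZ] /andP[/andP[bX bY] bZ]
     /andP[dI dZ] /andP[eI eZ].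
  case: (ncrossE (lsh_ncross cf lZ lY)) => hZY.
  - by move: (hZY a aZ); rewrite aY.
  - case: (boolP (Y \subset Z)) => [/subsetP YZ|nYZ]; first by move: (YZ b bY); rewrite (negbTE bZ).
    have lt : (#|Z| < #|Y|)%N.
      by apply: proper_card; rewrite properE nYZ andbT; apply/subsetP.
    case: (ncrossE (minY' Z lZ lt)) => hXZ.
    + by move: (hXZ a aX); rewrite aZ.
    + by move: (hZY q (hXZ q qX)); rewrite (negbTE qY).
    + by move: dI; rewrite (hXZ d dZ) (hZY d dZ).
    + by move: (hXZ g); rewrite (negbTE gX) /= => /hZY; rewrite (negbTE gY).
  - by move: (hZY b bY); rewrite (negbTE bZ).
  - have lW := lshC cf lZ.
    have WY x : x \in ~: Z -> x \in Y by rewrite inE => xZ; move: (hZY x); rewrite (negbTE xZ).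
    case: (boolP (Y \subset ~: Z)) => [/subsetP YW|nYW].
      by move: (YW a aY); rewrite inE aZ.
    have lt : (#|~: Z| < #|Y|)%N.
      by apply: proper_card; rewrite properE nYW andbT; apply/subsetP.
    case: (ncrossE (minY' _ lW lt)) => hXW.
    + by move: (hXW b bX); rewrite inE negbK (negbTE bZ).
    + by move: (WY q (hXW q qX)); rewrite (negbTE qY).
    + have eW : e \in ~: Z by rewrite inE.
      by move: eI; rewrite (hXW e eW) (WY e eW).
    + by move: (hXW g); rewrite (negbTE gX) /= => /WY; rewrite (negbTE gY).
have := submod X Y w0.
rewrite (cutw_lsh lI) (cutw_lsh lY) => hs.
have shU : shore (X :|: Y).
  apply/andP; split; first by apply/set0Pn; exists p; rewrite inE pX.
  by apply: (notT' (y:=g)); rewrite inE (negbTE gX) (negbTE gY).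
have ltU : (#|X| < #|X :|: Y|)%N.
  apply: proper_card; apply/properP; split; first exact: subsetUl.
  by exists r; rewrite ?inE ?rY ?orbT.
have := IH _ shU ltU; lra.
Qed.

End M.
Unset Implicit Arguments.

Theorem lemma9 (R : realFieldType) (V : finType) (w : {set V} -> R)
  (L : {set {set {set V}}}) (c : R) :
  (1 < #|V|)%N ->
  (forall e : {set V}, is_pair e -> 0 <= w e) ->
  maximal_cross_free L ->
  (forall C, C \in L -> forall X, X \in C -> cutw w X = c) ->
  (forall X : {set V}, shore X -> c <= cutw w X) /\
  (exists X : {set V}, shore X /\ cutw w X = c).
Proof.
move=> n1 w0 mx hc; split.
  suff H k : forall X : {set V}, (#|V| - #|X| <= k)%N -> shore X -> c <= cutw w X.
    by move=> X; apply: (H _ X (leqnn _)).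
  elim: k => [|k IHk] X hk; apply: (step w0 mx hc) => X' sX' lt.
    by have := max_card X'; lia.
  by apply: IHk => //; have := max_card X'; lia.
have /card_gt0P[v _] : (0 < #|V|)%N by lia.
have sh : shore [set v].
  apply/andP; split; first by apply/set0Pn; exists v; rewrite inE.
  apply/eqP => h; move: n1; rewrite -cardsT -h cards1.
  done.
exists [set v]; split => //; apply: (cutw_lsh hc); apply: (maxM mx.1 mx sh) => Z _.
apply/negP => /crossE[[a /andP[/set1P -> aZ]] [b /andP[/set1P -> bZ]] _ _].
by rewrite aZ in bZ.
Qed.
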